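(* Let $S$ be a finite semigroup. The following are equivalent: (i) $\mathbb{N}\times S$ has only countably many subsemigroups; (ii) $\mathbb{N}\times S$ has only countably many pairwise non-isomorphic subsemigroups; (iii) $S$ is a union of groups (i.e. every element of $S$ lies in some subgroup of $S$).
   Context: $\mathbb{N}=\{1,2,3,\dots\}$ is the free monogenic semigroup (positive integers under addition); $\mathbb{N}\times S$ is the direct product with componentwise operation. *)

(* Defs.v *)
From mathcomp Require Import all_boot.
Set Implicit Arguments. Unset Strict Implicit. Unset Printing Implicit Defensive.

Section NS.
Variables (S : finType) (op : S -> S -> S).

(* N x S, with N = {1,2,...} represented inside nat * S by requiring the first
   component to be >= 1; the operation is componentwise (addition on N, op on S). *)
Definition NSmul (x y : nat * S) : nat * S := (x.1 + y.1, op x.2 y.2).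

Definition is_subsemigroup (A : nat * S -> Prop) : Prop :=
  (forall x, A x -> 0 < x.1) /\
  (exists x, A x) /\
  (forall x y, A x -> A y -> A (NSmul x y)).

Definition subsemigroup_iso (A B : nat * S -> Prop) : Prop :=
  exists (phi psi : nat * S -> nat * S),
    (forall x, A x -> B (phi x)) /\ (forall y, B y -> A (psi y)) /\
    (forall x, A x -> psi (phi x) = x) /\ (forall y, B y -> phi (psi y) = y) /\
    (forall x y, A x -> A y -> phi (NSmul x y) = NSmul (phi x) (phi y)).

Definition countably_many_subsemigroups : Prop :=
  exists f : nat -> (nat * S -> Prop),
    forall A, is_subsemigroup A -> exists n, forall x, A x <-> f n x.

Definition countably_many_subsemigroups_upto_iso : Prop :=
  exists f : nat -> (nat * S -> Prop),
    forall A, is_subsemigroup A ->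
      exists n, is_subsemigroup (f n) /\ subsemigroup_iso A (f n).

Definition is_subgroup (G : {set S}) : Prop :=
  (forall g h, g \in G -> h \in G -> op g h \in G) /\
  exists2 e, e \in G &
    (forall g, g \in G -> op e g = g /\ op g e = g) /\
    (forall g, g \in G -> exists2 h, h \in G & op g h = e /\ op h g = e).

Definition union_of_groups : Prop :=
  forall s : S, exists G : {set S}, is_subgroup G /\ s \in G.

End NS.

(* Main.v *)
Require Import Defs.
From mathcomp Require Import all_boot.
From mathcomp Require Import zify.
From Stdlib Require Import Classical IndefiniteDescription.
Set Implicit Arguments. Unset Strict Implicit. Unset Printing Implicit Defensive.

Section Proofs.
Variables (S : finType) (op : S -> S -> S).
Hypothesis Hassoc : associative op.

Definition pw (s : S) (k : nat) : S := iter k (op s) s.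

Lemma pwS s k : pw s k.+1 = op s (pw s k). Proof. by []. Qed.

Lemma pw_iter s a b : iter a (op s) (pw s b) = pw s (a + b).
Proof. by rewrite /pw iterD. Qed.

Lemma pw_mul s a b : op (pw s a) (pw s b) = pw s (a + b).+1.
Proof.
elim: a => [|a IH]; first by [].
by rewrite pwS -Hassoc IH addSn.
Qed.

Lemma pigeon s : exists i d, 0 < d /\ pw s (i + d) = pw s i.
Proof.
pose f := fun i : 'I_(#|S|.+1) => pw s i.
have : ~~ injectiveb f.
  apply/negP => /injectiveP inj. have := @leq_card _ _ f inj. by rewrite card_ord ltnn.
move/injectivePn => [i [j ij fij]].
rewrite /f in fij.
have [lt|lt|e] := ltngtP i j.
- exists i, (j - i). split; first by rewrite subn_gt0.
  rewrite subnKC; [by rewrite fij | exact: ltnW].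
- exists j, (i - j). split; first by rewrite subn_gt0.
  rewrite subnKC; [by rewrite fij | exact: ltnW].
- by move: ij; rewrite (ord_inj e) eqxx.
Qed.

Lemma pw_per s i d : pw s (i + d) = pw s i -> forall m l, i <= m -> pw s (m + l * d) = pw s m.
Proof.
move=> H m l im.
have base : forall l, pw s (i + l * d) = pw s i.
  elim=> [|l' IH]; first by rewrite addn0.
  by rewrite mulSn addnA [i + d + _]addnC -pw_iter H pw_iter addnC IH.
by rewrite -{1}(subnK im) -addnA -pw_iter base pw_iter subnK.
Qed.

Lemma pow_rel s i d : 0 < d -> pw s (i + d) = pw s i ->
  forall x, 0 < x -> pw s (x * (i.+1 * d)).-1 = pw s (i.+1 * d).-1.
Proof.
move=> d0 H [//|x] _.
have K0 : 0 < i.+1 * d by rewrite muln_gt0 d0.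
have -> : (x.+1 * (i.+1 * d)).-1 = (i.+1 * d).-1 + (x * i.+1) * d.
  rewrite mulSn -mulnA; case: (i.+1 * d) K0 => [//|k] _; by rewrite addSn.
apply: (pw_per H).
by rewrite -ltnS prednK // leq_pmulr.
Qed.

Lemma sub_cancel (G : {set S}) s x y : is_subgroup op G -> s \in G -> x \in G -> y \in G ->
  op s x = op s y -> x = y.
Proof.
move=> [cl [e eG [ide inv]]] sG xG yG H.
have [h hG [_ hs]] := inv s sG.
have := congr1 (op h) H. rewrite !Hassoc hs.
by rewrite (ide x xG).1 (ide y yG).1.
Qed.

Lemma pw_in (G : {set S}) s k : is_subgroup op G -> s \in G -> pw s k \in G.
Proof.
move=> HG sG; elim: k => [//|k IH].
rewrite pwS. by case: HG => cl _; apply: cl.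
Qed.

Lemma idem_right s (G : {set S}) : is_subgroup op G -> s \in G -> exists t, op s (pw s t) = s.
Proof.
move=> HG sG. have [i [d [d0 H]]] := pigeon s.
exists d.-1.
have E : op (pw s i) (pw s d.-1) = pw s i.
  by rewrite pw_mul -addnS (prednK d0) H.
elim: i E {H} => [//|i IH] E. apply: IH.
have cl : forall g h, g \in G -> h \in G -> op g h \in G by case: HG.
apply: (@sub_cancel G s) => //.
- by apply: cl; apply: pw_in.
- by apply: pw_in.
by rewrite Hassoc; exact E.
Qed.

Lemma shift_iter (X : nat -> Prop) p : (forall n, X n -> X (n + p)) ->
  forall n j, X n -> X (n + j * p).
Proof.
move=> H n j Xn; elim: j => [|j IH]; first by rewrite addn0.
have -> : n + j.+1 * p = n + j * p + p by rewrite mulSnr addnA.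
exact: H.
Qed.

Lemma eventual (X : nat -> Prop) p : 0 < p -> (forall n, X n -> X (n + p)) ->
  exists N, forall n, N <= n -> X (n + p) -> X n.
Proof.
move=> p0 H.
suff: forall m, exists N, forall n, N <= n -> n %% p < m -> X (n + p) -> X n.
  move=> /(_ p) [N HN]; exists N => n Nn; apply: HN => //; exact: ltn_pmod.
elim=> [|m [N HN]]; first by exists 0.
have [[k Xk]|nX] := classic (exists k, X (m + k * p)).
- exists (maxn N (m + k * p)) => n; rewrite geq_max => /andP [Nn kn] nm Xnp.
  rewrite ltnS leq_eqVlt in nm. case/orP: nm => [/eqP nm | nm]; last exact: HN.
  have En : n = m + (n %/ p) * p by rewrite {1}(divn_eq n p) nm addnC.
  have kj : k <= n %/ p.
    have : m + k * p <= m + n %/ p * p by rewrite -En.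
    by rewrite leq_add2l leq_pmul2r.
  rewrite En.
  have -> : m + n %/ p * p = m + k * p + (n %/ p - k) * p.
    have := kj; nia.
  exact: shift_iter.
- exists N => n Nn nm Xnp. rewrite ltnS leq_eqVlt in nm.
  case/orP: nm => [/eqP nm | nm]; last exact: HN.
  exfalso; apply: nX; exists (n %/ p).+1.
  by rewrite mulSnr addnA -nm [n %% p + _]addnC -divn_eq.
Qed.

Definition red p N n := if n < N then n else N + (n - N) %% p.

Lemma red_ok (X : nat -> Prop) p N : 0 < p -> (forall n, X n -> X (n + p)) ->
  (forall n, N <= n -> X (n + p) -> X n) -> forall n, X n <-> X (red p N n).
Proof.
move=> p0 H1 H2.
have step : forall m j, N <= m -> X m <-> X (m + j * p).
  move=> m j Nm; split; first exact: shift_iter.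
  elim: j => [|j IH]; first by rewrite addn0.
  rewrite mulSnr addnA => Xj. apply: IH. apply: H2 => //. exact: leq_trans Nm (leq_addr _ _).
move=> n; rewrite /red; case: ltnP => [_|Nn]; first by split.
rewrite {1}(_ : n = N + (n - N) %% p + (n - N) %/ p * p); last first.
  by rewrite -addnA [_ %% p + _]addnC -divn_eq subnKC.
apply: iff_sym; apply: step. exact: leq_addr.
Qed.

Lemma red_lt p N n : 0 < p -> red p N n < N + p.
Proof.
move=> p0; rewrite /red; case: (ltnP n N) => h; first lia.
have := ltn_pmod (n - N) p0; lia.
Qed.

Lemma mklist (X : nat -> Prop) L : exists l : seq bool,
  size l = L /\ forall i, i < L -> (nth false l i <-> X i).
Proof.
elim: L => [|L [l [sz Hl]]]; first by exists [::]; split => // i; rewrite ltn0.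
have [XL|nXL] := classic (X L).
- exists (rcons l true); rewrite size_rcons sz; split => // i.
  rewrite ltnS leq_eqVlt nth_rcons sz.
  case/orP => [/eqP -> | iL]; first by rewrite ltnn eqxx; split.
  by rewrite iL; apply: Hl.
- exists (rcons l false); rewrite size_rcons sz; split => // i.
  rewrite ltnS leq_eqVlt nth_rcons sz.
  case/orP => [/eqP -> | iL]; first by rewrite ltnn eqxx; split.
  by rewrite iL; apply: Hl.
Qed.

Definition code := (nat * nat * seq bool)%type.
Definition dec (c : code) (n : nat) : Prop := nth false c.2 (red c.1.1 c.1.2 n).

Lemma code_exists (X : nat -> Prop) p : 0 < p -> (forall n, X n -> X (n + p)) ->
  exists c : code, forall n, X n <-> dec c n.
Proof.
move=> p0 H.
have [N HN] := eventual p0 H.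
have [l [_ Hl]] := mklist X (N + p).
exists (p, N, l) => n; rewrite /dec /=.
apply: iff_trans (red_ok p0 H HN n) _.
apply: iff_sym; apply: Hl. exact: red_lt.
Qed.

Definition npw (x : nat * S) k := iter k (NSmul op x) x.

Lemma npw_eq a t k : npw (a, t) k = (k.+1 * a, pw t k).
Proof.
elim: k => [|k IH]; first by rewrite mul1n.
by rewrite /npw /= -/(npw (a, t) k) IH /NSmul /= mulSn.
Qed.

Lemma npw_fst x k : (npw x k).1 = k.+1 * x.1.
Proof. by case: x => a t; rewrite npw_eq. Qed.

Lemma npw_in (A : nat * S -> Prop) x k : (forall x y, A x -> A y -> A (NSmul op x y)) ->
  A x -> A (npw x k).
Proof. move=> Am Ax; elim: k => [|k IH] //=; exact: Am. Qed.

Lemma phi_npw (A : nat * S -> Prop) phi x k : (forall x y, A x -> A y -> A (NSmul op x y)) ->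
  (forall x y, A x -> A y -> phi (NSmul op x y) = NSmul op (phi x) (phi y)) ->
  A x -> phi (npw x k) = npw (phi x) k.
Proof.
move=> Am H5 Ax; elim: k => [//|k IH].
rewrite /npw /= -!/(npw _ k) H5 ?IH //. exact: npw_in.
Qed.

Lemma iii_i : union_of_groups op -> countably_many_subsemigroups op.
Proof.
move=> HU.
pose C := {ffun S -> code}.
exists (fun n x => match @unpickle C n with Some F => dec (F x.2) x.1 | None => False end).
move=> A [Apos [_ Amul]].
have Hs : forall s, exists c : code, forall n, A (n, s) <-> dec c n.
  move=> s.
  have [[n0 An0]|nA] := classic (exists n0, A (n0, s)).
  - have [G [HG sG]] := HU s.
    have [t Ht] := idem_right HG sG.
    apply: (@code_exists (fun n => A (n, s)) (t.+1 * n0)).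
      rewrite muln_gt0 /=; exact: (Apos (n0, s) An0).
    move=> n An /=.
    have Ap : A (t.+1 * n0, pw s t) by rewrite -npw_eq; apply: npw_in.
    have := Amul _ _ An Ap. by rewrite /NSmul /= Ht.
  - apply: (@code_exists _ 1) => // n An; exfalso; apply: nA; by exists n.
pose F := [ffun s => proj1_sig (constructive_indefinite_description _ (Hs s))].
exists (pickle F) => -[n s]. rewrite pickleK /= ffunE.
exact: (proj2_sig (constructive_indefinite_description _ (Hs s)) n).
Qed.


Lemma i_ii : countably_many_subsemigroups op -> countably_many_subsemigroups_upto_iso op.
Proof.
move=> [f Hf]; exists f => A HA.
have [n Hn] := Hf A HA.
exists n; split.
- case: HA => [Ap [[x Ax] Am]]; split; last split.
  + by move=> x0 /Hn /Ap.
  + by exists x; apply/Hn.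
  + by move=> x0 y0 /Hn Ax0 /Hn Ay0; apply/Hn; apply: Am.
- exists id, id; do !split => //.
  + by move=> x /Hn.
  + by move=> y /Hn.
Qed.

Lemma psi_hom (A B : nat * S -> Prop) phi psi :
  (forall x, A x -> B (phi x)) -> (forall y, B y -> A (psi y)) ->
  (forall x, A x -> psi (phi x) = x) -> (forall y, B y -> phi (psi y) = y) ->
  (forall x y, A x -> A y -> phi (NSmul op x y) = NSmul op (phi x) (phi y)) ->
  (forall x y, A x -> A y -> A (NSmul op x y)) ->
  forall x y, B x -> B y -> psi (NSmul op x y) = NSmul op (psi x) (psi y).
Proof.
move=> H1 H2 H3 H4 H5 Am x y Bx By.
rewrite -{1}(H4 x Bx) -{1}(H4 y By) -(H5 _ _ (H2 _ Bx) (H2 _ By)) H3 //.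
exact: Am (H2 _ Bx) (H2 _ By).
Qed.

Lemma iso_sym (A B : nat * S -> Prop) : (forall x y, A x -> A y -> A (NSmul op x y)) ->
  subsemigroup_iso op A B -> subsemigroup_iso op B A.
Proof.
move=> Am [phi [psi [H1 [H2 [H3 [H4 H5]]]]]].
exists psi, phi; do !split => //.
exact: psi_hom H1 H2 H3 H4 H5 Am.
Qed.

Lemma iso_trans (A B C : nat * S -> Prop) :
  subsemigroup_iso op A B -> subsemigroup_iso op B C -> subsemigroup_iso op A C.
Proof.
move=> [phi [psi [H1 [H2 [H3 [H4 H5]]]]]] [phi' [psi' [H1' [H2' [H3' [H4' H5']]]]]].
exists (fun x => phi' (phi x)), (fun y => psi (psi' y)); do !split.
- by move=> x Ax; apply: H1'; apply: H1.
- by move=> y Cy; apply: H2; apply: H2'.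
- by move=> x Ax; rewrite H3' ?H3 //; apply: H1.
- by move=> y Cy; rewrite H4 ?H4' //; apply: H2'.
- by move=> x y Ax Ay; rewrite H5 // H5' //; apply: H1.
Qed.

Section Gen.
Variables (s : S) (X : nat -> Prop).
Inductive gen : nat * S -> Prop :=
| gen_base n : X n -> gen (n, s)
| gen_mul u v : gen u -> gen v -> gen (NSmul op u v).

Lemma gen_pw x : gen x -> exists k, x.2 = pw s k.
Proof.
elim=> [n _|u v _ [a Ha] _ [b Hb]]; first by exists 0.
by exists (a + b).+1; rewrite /NSmul /= Ha Hb pw_mul.
Qed.

Lemma gen_dec x : gen x -> (x.2 = s /\ X x.1) \/ (exists u v, gen u /\ gen v /\ x = NSmul op u v).
Proof.
case=> [n Xn|u v gu gv]; first by left.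
by right; exists u, v.
Qed.

Lemma gen_sub : (forall n, X n -> 0 < n) -> X 1 -> is_subsemigroup op gen.
Proof.
move=> Xp X1; split; last split.
- move=> x; elim=> [n /Xp //|u v _ Hu _ Hv]; rewrite /NSmul /=; lia.
- by exists (1, s); apply: gen_base.
- exact: gen_mul.
Qed.
End Gen.

Section NonGroup.
Variable s : S.
Hypothesis Hns : forall k, 0 < k -> pw s k <> s.

Lemma gen_mul_ne X u v : gen s X u -> gen s X v -> (NSmul op u v).2 <> s.
Proof.
move=> /gen_pw [a Ha] /gen_pw [b Hb]; rewrite /NSmul /= Ha Hb pw_mul.
exact: Hns.
Qed.

Lemma gen_phi X Y phi psi :
  (forall n, X n -> 0 < n) -> X 1 ->
  (forall x, gen s X x -> gen s Y (phi x)) -> (forall y, gen s Y y -> gen s X (psi y)) ->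
  (forall x, gen s X x -> psi (phi x) = x) -> (forall y, gen s Y y -> phi (psi y) = y) ->
  (forall x y, gen s X x -> gen s X y -> phi (NSmul op x y) = NSmul op (phi x) (phi y)) ->
  forall a, X a -> phi (a, s) = (a * (phi (1, s)).1, s) /\ Y (a * (phi (1, s)).1).
Proof.
move=> Xp X1 H1 H2 H3 H4 H5.
have psiM := psi_hom H1 H2 H3 H4 H5 (@gen_mul s X).
have gens : forall a, X a -> phi (a, s) = ((phi (a, s)).1, s) /\ Y (phi (a, s)).1.
  move=> a Xa. have G1 : gen s Y (phi (a, s)) by apply: H1; apply: gen_base.
  case: (gen_dec G1) => [[E Yv] | [u [v [gu [gv E]]]]].
    by move: E Yv; case: (phi (a, s)) => y t /= -> Yy.
  have E2 : (a, s) = NSmul op (psi u) (psi v).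
    by rewrite -psiM // -E H3 //; apply: gen_base.
  exfalso; apply: (@gen_mul_ne X (psi u) (psi v)); [exact: H2 | exact: H2 |].
  by rewrite -E2.
have [i [d [d0 Hid]]] := pigeon s.
pose K := i.+1 * d.
have K0 : 0 < K by rewrite muln_gt0 d0.
have rel : forall a b, X a -> X b -> (phi (a, s)).1 * b = (phi (b, s)).1 * a.
  move=> a b Xa Xb.
  have a0 := Xp a Xa; have b0 := Xp b Xb.
  have R : npw (a, s) (b * K).-1 = npw (b, s) (a * K).-1.
    rewrite !npw_eq !prednK ?muln_gt0 ?a0 ?b0 ?K0 //.
    rewrite !(pow_rel d0 Hid) //. congr pair. lia.
  have := congr1 (fun x => (phi x).1) R.
  have ga : gen s X (a, s) by apply: gen_base.
  have gb : gen s X (b, s) by apply: gen_base.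
  rewrite /= (@phi_npw _ phi (a, s) (b * K).-1 (@gen_mul s X) H5 ga).
  rewrite (@phi_npw _ phi (b, s) (a * K).-1 (@gen_mul s X) H5 gb) !npw_fst.
  rewrite !prednK ?muln_gt0 ?a0 ?b0 ?K0 // => E.
  apply/eqP; rewrite -(eqn_pmul2r K0); apply/eqP. lia.
move=> a Xa; have [E Ya] := gens a Xa.
have r := rel a 1 Xa X1; rewrite muln1 in r.
rewrite E r mulnC; split => //.
by rewrite r mulnC in Ya.
Qed.

Lemma gen_iso_sub X Y : (forall n, X n -> 0 < n) -> (forall n, Y n -> 0 < n) -> X 1 -> Y 1 ->
  subsemigroup_iso op (gen s X) (gen s Y) -> forall a, X a -> Y a.
Proof.
move=> Xp Yp X1 Y1 [phi [psi [H1 [H2 [H3 [H4 H5]]]]]].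
have psiM := psi_hom H1 H2 H3 H4 H5 (@gen_mul s X).
have LA := gen_phi Xp X1 H1 H2 H3 H4 H5.
have LB := gen_phi Yp Y1 H2 H1 H4 H3 psiM.
have [E1 Yy1] := LA 1 X1. rewrite mul1n in E1 Yy1.
have [E2 _] := LB _ Yy1.
have := H3 (1, s) (gen_base _ X1).
rewrite E1 E2 => -[] /eqP; rewrite muln_eq1 => /andP [/eqP y1e _].
move=> a Xa. have [_ Ya] := LA a Xa. by rewrite y1e muln1 in Ya.
Qed.

End NonGroup.

Definition grp (s : S) k : {set S} := [set x | [exists j : 'I_k, x == pw s j]].

Lemma grp_ok s k : 0 < k -> pw s k = s -> is_subgroup op (grp s k) /\ s \in grp s k.
Proof.
move=> k0 Hk.
have per : forall j, pw s (k + j) = pw s j.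
  elim=> [|j IH]; first by rewrite addn0.
  by rewrite addnS pwS IH.
have all_in : forall j, pw s j \in grp s k.
  elim/ltn_ind => j IH.
  case: (ltnP j k) => jk.
    by rewrite inE; apply/existsP; exists (Ordinal jk).
  rewrite -(subnKC jk) per. apply: IH. lia.
have mem : forall x, x \in grp s k -> exists2 j, j < k & x = pw s j.
  move=> x; rewrite inE => /existsP [j /eqP ->]. by exists j.
split; last exact: (all_in 0).
split.
  move=> g h /mem [a _ ->] /mem [b _ ->]. by rewrite pw_mul.
exists (pw s k.-1); first exact: all_in.
split.
- move=> g /mem [a _ ->]; rewrite !pw_mul.
  have -> : (k.-1 + a).+1 = k + a by lia.
  have -> : (a + k.-1).+1 = k + a by lia.
  by rewrite per.
- move=> g /mem [a ak ->]. exists (pw s (k - a.+1 + k.-1)); first exact: all_in.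
  rewrite !pw_mul.
  have -> : (a + (k - a.+1 + k.-1)).+1 = k + k.-1 by lia.
  have -> : (k - a.+1 + k.-1 + a).+1 = k + k.-1 by lia.
  by rewrite per.
Qed.

Lemma ii_iii : countably_many_subsemigroups_upto_iso op -> union_of_groups op.
Proof.
move=> [f Hf]. apply: NNPP => HnU.
have [s Hs] : exists s, forall G, ~ (is_subgroup op G /\ s \in G).
  apply: NNPP => H. apply: HnU => s0. apply: NNPP => H2. apply: H.
  exists s0 => G HG. apply: H2. by exists G.
have Hns : forall k, 0 < k -> pw s k <> s.
  move=> k k0 E. apply: (Hs (grp s k)). exact: grp_ok.
pose XZ (Z : nat -> Prop) n := n = 1 \/ (2 <= n /\ Z (n - 2)).
have XZp : forall Z n, XZ Z n -> 0 < n.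
  move=> Z n; rewrite /XZ; case=> [-> //|[h _]]; lia.
have XZ1 : forall Z, XZ Z 1 by move=> Z; left.
pose A Z := gen s (XZ Z).
have AZ : forall Z, is_subsemigroup op (A Z) by move=> Z; exact: gen_sub (XZp Z) (XZ1 Z).
have Am : forall Z x y, A Z x -> A Z y -> A Z (NSmul op x y) by move=> Z x y; exact: gen_mul.
have key : forall Z Z', subsemigroup_iso op (A Z) (A Z') -> forall n, Z n -> Z' n.
  move=> Z Z' HI n Zn.
  have Hx : XZ Z (n + 2) by right; split; [lia | rewrite addnK].
  case: (gen_iso_sub Hns (XZp Z) (XZp Z') (XZ1 Z) (XZ1 Z') HI Hx) => [|[_]]; first lia.
  by rewrite addnK.
pose D n := exists Z, subsemigroup_iso op (A Z) (f n) /\ ~ Z n.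
have [n0 [Hsub Hn0]] := Hf (A D) (AZ D).
have nD : ~ D n0.
  move=> Dn0; have [Z [HZ nZ]] := Dn0. apply: nZ. apply: (key D Z _ n0 Dn0).
  apply: iso_trans Hn0 _. apply: (iso_sym (Am Z)). exact: HZ.
apply nD; exists D; split; [exact: Hn0 | exact: nD].
Qed.

End Proofs.

Theorem theoremD (S : finType) (op : S -> S -> S) (Hassoc : associative op) :
  (countably_many_subsemigroups op <-> countably_many_subsemigroups_upto_iso op) /\
  (countably_many_subsemigroups_upto_iso op <-> union_of_groups op).
Proof.
have h1 := @i_ii S op. have h2 := @ii_iii S op Hassoc. have h3 := @iii_i S op Hassoc.
split; split => H; [exact: h1 | exact: h3 (h2 H) | exact: h2 | exact: h1 (h3 H)].
Qed.
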